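(* Let $a,c,p\in\mathbb{C}$ with $-c\notin\mathbb{N}\cup\{0\}$. Define the sequence $(u_n)_{n\ge 0}$ by $u_0=1$, $u_1=a/c+p$ and, for all integers $n\ge 1$, \[ u_{n+1}=\frac{a+cp+2np+n}{(n+1)(c+n)}\,u_n-\frac{p(p+1)}{(n+1)(c+n)}\,u_{n-1}. \] Then \[ e^{pz}M(a,c;z)=\sum_{n=0}^\infty u_n z^n,\qquad z\in\mathbb{C}. \]
   Context: For $a\in\mathbb{C}$, $(a)_n=a(a+1)\cdots(a+n-1)$ denotes the Pochhammer symbol, with $(a)_0=1$. For $a,c\in\mathbb{C}$ with $-c\notin\mathbb{N}\cup\{0\}$, the confluent hypergeometric (Kummer) function is $M(a,c;z)=\sum_{n=0}^\infty \frac{(a)_n}{(c)_n\,n!}z^n$, $z\in\mathbb{C}$. *)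

(* Defs.v *)
From HB Require Import structures.
From mathcomp Require Import all_boot all_order all_algebra.
From mathcomp Require Import all_classical all_reals all_analysis.
From mathcomp Require Export complex.
Import Order.TTheory GRing.Theory Num.Theory.
Import numFieldNormedType.Exports.

Set Implicit Arguments.
Unset Strict Implicit.
Unset Printing Implicit Defensive.

Local Open Scope ring_scope.
Local Open Scope classical_set_scope.

(* The complex numbers over a real type R (R[i], with the modulus as norm),
   seen as a numClosedFieldType so that MathComp-Analysis' topology applies. *)
Definition Cplx (R : realType) : numClosedFieldType := R[i].

Section Defs.
Variable R : realType.
Local Notation C := (Cplx R).

Definition poch (a : C) (n : nat) : C := \prod_(i < n) (a + i%:R).

Definition kummer_term (a c z : C) (n : nat) : C :=
  poch a n / (poch c n * (n`!)%:R) * z ^+ n.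

Definition kummerM (a c z : C) : C := limn (series (kummer_term a c z)).

Definition expC (z : C) : C := limn (series (fun n => z ^+ n / (n`!)%:R)).

(* upair n = (u_n, u_{n+1}) for the recurrence of the statement:
   u_0 = 1, u_1 = a/c + p, and for m >= 1
   u_{m+1} = (a+cp+2mp+m)/((m+1)(c+m)) u_m - p(p+1)/((m+1)(c+m)) u_{m-1}. *)
Fixpoint upair (a c p : C) (n : nat) : C * C :=
  match n with
  | 0 => (1, a / c + p)
  | n'.+1 =>
      let: (x, y) := upair a c p n' in
      let m : C := (n'.+1)%:R in
      (y, (a + c * p + 2 * m * p + m) / ((m + 1) * (c + m)) * y
          - p * (p + 1) / ((m + 1) * (c + m)) * x)
  end.

Definition useq (a c p : C) (n : nat) : C := (upair a c p n).1.

End Defs.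

(* Main.v *)
Require Import Defs.
From HB Require Import structures.
From mathcomp Require Import all_boot all_order all_algebra.
From mathcomp Require Import all_classical all_reals all_analysis.
From mathcomp Require Import complex.
From mathcomp Require Import ring lra zify.
Import Order.TTheory GRing.Theory Num.Theory.
Import numFieldNormedType.Exports.
Local Open Scope ring_scope.
Local Open Scope classical_set_scope.

Section Alg.
Variable R : realType.
Local Notation C := (Cplx R).
Variables (a c p : C).
Hypothesis hc : forall n : nat, c != - (n%:R).

Definition mm (j : nat) : C := poch a j / (poch c j * (j`!)%:R).
Definition ee (k : nat) : C := p ^+ k / (k`!)%:R.
Definition WW (n : nat) : C := \sum_(i < n.+1) mm i * ee (n - i).

Lemma fact_neq0 n : (n`!)%:R != 0 :> C.
Proof. by rewrite pnatr_eq0 -lt0n fact_gt0. Qed.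

Lemma nat1_neq0 n : (n.+1)%:R != 0 :> C.
Proof. by rewrite pnatr_eq0. Qed.

Lemma cn_neq0 n : c + n%:R != 0.
Proof. by rewrite addr_eq0; apply: hc. Qed.

Lemma poch_neq0 n : poch c n != 0.
Proof. by rewrite /poch; apply/prodf_neq0 => i _; apply: cn_neq0. Qed.

Lemma pochS (x : C) n : poch x n.+1 = poch x n * (x + n%:R).
Proof. by rewrite /poch big_ord_recr. Qed.

Lemma ee_rec k : (k.+1)%:R * ee k.+1 = p * ee k.
Proof.
rewrite /ee factS natrM exprS.
have := fact_neq0 k; have := nat1_neq0 k => h1 h2.
by field; rewrite h2 /= addrC natr1 nat1_neq0.
Qed.

Lemma mm_rec j : (j.+1)%:R * (c + j%:R) * mm j.+1 = (a + j%:R) * mm j.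
Proof.
rewrite /mm !pochS factS natrM.
have := fact_neq0 j; have := nat1_neq0 j; have := poch_neq0 j; have := cn_neq0 j.
move=> h1 h2 h3 h4.
by field; rewrite h1 h2 h4 /= addrC natr1 nat1_neq0.
Qed.

Lemma convl (h : nat -> nat -> C) n :
  \sum_(i < n.+2) h i (n.+1 - i)%N = h 0%N n.+1 + \sum_(i < n.+1) h i.+1 (n - i)%N.
Proof. by rewrite big_ord_recl subn0. Qed.

Lemma convr (h : nat -> nat -> C) n :
  \sum_(i < n.+2) h i (n.+1 - i)%N = \sum_(i < n.+1) h i (n - i)%N.+1 + h n.+1 0%N.
Proof.
rewrite big_ord_recr subnn /=; congr (_ + _).
by apply: eq_bigr => i _; rewrite /= subSn // -ltnS.
Qed.

Lemma conv_eq (h1 h2 : nat -> nat -> C) n :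
  (forall i k, (i + k)%N = n -> h1 i k = h2 i k) ->
  \sum_(i < n.+1) h1 i (n - i)%N = \sum_(i < n.+1) h2 i (n - i)%N.
Proof.
move=> H; apply: eq_bigr => i _; apply: H; rewrite subnKC //.
by rewrite -ltnS.
Qed.

Lemma WW_rec n : let m : C := (n.+1)%:R in
  (m + 1) * (c + m) * WW n.+2 =
  (a + c * p + 2 * m * p + m) * WW n.+1 - p * (p + 1) * WW n.
Proof.
move=> m.
set N := n.+1.
have A : (m + 1) * (c + m) * WW N.+1 =
   \sum_(i < N.+1) (a + i%:R + p * i%:R) * (mm i * ee (N - i)%N)
   + p * (c + m) * WW N.
  rewrite /WW mulr_sumr.
  rewrite (@conv_eq (fun i k => (m + 1) * (c + m) * (mm i * ee k))
     (fun i k => i%:R * (c + i%:R - 1) * mm i * ee k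
                      + i%:R * k%:R * mm i * ee k
                      + k%:R * (c + m) * mm i * ee k) N.+1); last first.
    move=> i k hik.
    have -> : m + 1 = i%:R + k%:R by rewrite -natrD hik /m natr1.
    have -> : m = i%:R + k%:R - 1 by rewrite -natrD hik -[N.+1]addn1 natrD addrK.
    ring.
  rewrite !big_split /=.
  rewrite (convl (fun i k => i%:R * (c + i%:R - 1) * mm i * ee k)) /=.
  rewrite (convr (fun i k => i%:R * k%:R * mm i * ee k)) /=.
  rewrite (convr (fun i k => k%:R * (c + m) * mm i * ee k)) /=.
  rewrite !mul0r !mulr0 !mul0r !add0r !addr0.
  rewrite mulr_sumr -!big_split /=.
  apply: eq_bigr => i _.
  have e1 := mm_rec i. have e2 := ee_rec (N - i)%N.
  have -> : (i.+1)%:R * (c + (i.+1)%:R - 1) * mm i.+1 = (a + i%:R) * mm i.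
    by rewrite -e1 -natr1; congr (_ * _ * _); ring.
  transitivity ((a + i%:R) * mm i * ee (N - i)%N
     + i%:R * mm i * ((N - i).+1%:R * ee (N - i).+1)
     + (c + m) * mm i * ((N - i).+1%:R * ee (N - i).+1)); first ring.
  rewrite e2; ring.
have B : \sum_(i < N.+1) (N - i)%:R * (mm i * ee (N - i)%N) = p * WW n.
  rewrite (convr (fun i k => k%:R * (mm i * ee k))) mul0r addr0 /WW mulr_sumr.
  apply: eq_bigr => i _.
  by rewrite mulrCA ee_rec mulrCA.
have B2 : \sum_(i < N.+1) (a + i%:R + p * i%:R) * (mm i * ee (N - i)%N)
   = (a + m + p * m) * WW N - (1 + p) * (p * WW n).
  rewrite -B /WW !mulr_sumr -sumrB.
  apply: (@conv_eq (fun i k => (a + i%:R + p * i%:R) * (mm i * ee k))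
    (fun i k => (a + m + p * m) * (mm i * ee k) - (1 + p) * (k%:R * (mm i * ee k)))) => i k hik.
  have -> : m = i%:R + k%:R by rewrite -natrD hik.
  ring.
rewrite A B2; ring.
Qed.

Lemma upairW n : upair a c p n = (WW n, WW n.+1).
Proof.
elim: n => [|n IH].
  rewrite /= /WW !big_ord_recr !big_ord0 /= /mm /ee /poch !big_ord_recr !big_ord0 /=.
  rewrite ?add0r ?mul1r ?fact0 ?mulr1 ?addr0 ?expr0 ?expr1 ?subn0 ?subnn.
  have hc0 : c != 0 by have := cn_neq0 0; rewrite addr0.
  by congr (_, _); rewrite /= ?mulr1n; field; rewrite ?hc0 ?oner_neq0.
rewrite /= IH /=; congr (_, _).
have := WW_rec n => /= H.
set m : C := (n.+1)%:R in H *.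
have hm : (m + 1) * (c + m) != 0.
  rewrite mulf_neq0 //; first by rewrite /m natr1 nat1_neq0.
  exact: cn_neq0.
apply: (mulfI hm); rewrite H; field.
have e : 1 + n%:R = (n.+1)%:R :> C by rewrite addrC natr1.
rewrite e cn_neq0 /= natr1; exact: nat1_neq0.
Qed.

End Alg.

Section Ana.
Variable R : realType.
Local Notation C := (Cplx R).
Local Notation nc := (@Normc.normc R).

Lemma nc_ge0 (x : C) : 0 <= nc x.
Proof. by case: x => x y; rewrite /Normc.normc sqrtr_ge0. Qed.

Lemma nc_Re (x : C) : `|complex.Re x| <= nc x.
Proof.
case: x => x y /=; rewrite /Normc.normc -sqrtr_sqr.
by rewrite ler_wsqrtr // lerDl sqr_ge0.
Qed.

Lemma nc_Im (x : C) : `|complex.Im x| <= nc x.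
Proof.
case: x => x y /=; rewrite /Normc.normc -sqrtr_sqr.
by rewrite ler_wsqrtr // lerDr sqr_ge0.
Qed.

Lemma nc_ReIm (x : C) : nc x <= `|complex.Re x| + `|complex.Im x|.
Proof.
case: x => x y /=; rewrite /Normc.normc.
rewrite -(ger0_norm (addr_ge0 (normr_ge0 x) (normr_ge0 y))) -sqrtr_sqr.
rewrite ler_wsqrtr //.
  rewrite sqrrD !real_normK ?num_real //.
by rewrite -addrA lerD2l lerDr mulrn_wge0 // mulr_ge0.
Qed.

Lemma nc_sum (I : Type) (r : seq I) (P : pred I) (F : I -> C) :
  nc (\sum_(i <- r | P i) F i) <= \sum_(i <- r | P i) nc (F i).
Proof.
elim/big_ind2 : _ => //.
  by rewrite Normc.normc0.
move=> x1 x2 y1 y2 h1 h2.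
by apply: le_trans (le_normcD _ _) (lerD h1 h2).
Qed.

Lemma nc_natr n : nc (n%:R : C) = n%:R.
Proof. by rewrite -[n%:R]/((1 : C) *+ n) normcMn Normc.normc1. Qed.

Lemma nc_M (x y : C) : nc (x * y) = nc x * nc y.
Proof. exact: Normc.normcM. Qed.

Lemma nc_N (x : C) : nc (- x) = nc x.
Proof. exact: normcN. Qed.

Lemma cvg_bound (u : nat -> C) (l : C) (r : nat -> R) :
  r @ \oo --> 0 -> (forall n, nc (u n - l) <= r n) -> u @ \oo --> l.
Proof.
move=> r0 hb; apply/cvgrPdist_lt => eps eps0.
move: (eps0); rewrite ltcE /= => /andP[/eqP hIm hRe].
move/cvgrPdist_lt: r0 => /(_ _ hRe).
apply: filterS => n hn.
have -> : eps = ((complex.Re eps)%:C)%C by case: eps hIm {eps0 hRe hn} => ?? /= ->.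
rewrite -[X in X < _]/(((nc (l - u n))%:C)%C) ltcR.
rewrite -opprB nc_N; apply: le_lt_trans (hb n) _.
apply: le_lt_trans hn; rewrite sub0r normrN.
exact: ler_norm.
Qed.


Lemma cvg_ReIm (u : nat -> C) lr li :
  (fun n => complex.Re (u n)) @ \oo --> lr ->
  (fun n => complex.Im (u n)) @ \oo --> li -> u @ \oo --> ((lr +i* li)%C : C).
Proof.
move=> hr hi.
apply: (@cvg_bound _ _ (fun n => `|complex.Re (u n) - lr| + `|complex.Im (u n) - li|)).
  rewrite -[0 : R](addr0 0).
  apply: cvgD.
    have := cvg_norm (cvgB hr (cvg_cst lr)); rewrite subrr normr0; exact.
  have := cvg_norm (cvgB hi (cvg_cst li)); rewrite subrr normr0; exact.
move=> n; case: (u n) => x y.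
exact: (nc_ReIm ((x +i* y)%C - (lr +i* li)%C : C)).
Qed.


Lemma ReD (x y : C) : complex.Re (x + y) = complex.Re x + complex.Re y.
Proof. by case: x => ??; case: y => ??. Qed.
Lemma ImD (x y : C) : complex.Im (x + y) = complex.Im x + complex.Im y.
Proof. by case: x => ??; case: y => ??. Qed.

Lemma Re_sum (r : seq nat) (P : pred nat) (F : nat -> C) :
  complex.Re (\sum_(i <- r | P i) F i) = \sum_(i <- r | P i) complex.Re (F i).
Proof.
elim/big_ind2 : _ => // x1 x2 y1 y2 <- <-.
exact: ReD.
Qed.

Lemma Im_sum (r : seq nat) (P : pred nat) (F : nat -> C) :
  complex.Im (\sum_(i <- r | P i) F i) = \sum_(i <- r | P i) complex.Im (F i).
Proof.
elim/big_ind2 : _ => // x1 x2 y1 y2 <- <-.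
exact: ImD.
Qed.

Lemma geom_bound (f : nat -> R) (q : R) N0 : 0 < q -> (forall n, 0 <= f n) ->
  (forall n, (N0 <= n)%N -> f n.+1 <= q * f n) ->
  exists K, 0 <= K /\ forall n, f n <= K * q ^+ n.
Proof.
move=> q0 f0 hrec.
set K := \sum_(i < N0.+1) f i / q ^+ i.
have K0 : 0 <= K by apply: sumr_ge0 => i _; rewrite divr_ge0 // exprn_ge0 // ltW.
have small : forall n, (n <= N0)%N -> f n <= K * q ^+ n.
  move=> n hn.
  have qn : 0 < q ^+ n by rewrite exprn_gt0.
  rewrite -ler_pdivrMr //.
  rewrite /K (bigD1 (Ordinal (hn : (n < N0.+1)%N))) //=.
  by rewrite lerDl; apply: sumr_ge0 => i _; rewrite divr_ge0 // exprn_ge0 // ltW.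
exists K; split => //.
elim=> [|n IH]; first exact: small.
case: (leqP n.+1 N0) => [le|lt]; first exact: small.
apply: le_trans (hrec n _) _; first by rewrite -ltnS.
rewrite exprS mulrCA; apply: ler_wpM2l; first exact: ltW.
exact: IH.
Qed.

Lemma series_cvg_geom (x : nat -> C) (K q : R) : 0 <= q -> q < 1 ->
  (forall n, nc (x n) <= K * q ^+ n) -> exists L : C, series x @ \oo --> L.
Proof.
move=> q0 q1 hb.
have hg : cvgn (series (geometric K q)).
  by apply: is_cvg_geometric_series; rewrite ger0_norm.
have hr : cvgn (series (fun n => complex.Re (x n))).
  apply: (@normed_cvg R R).
  apply: (@series_le_cvg R _ (geometric K q)) => //.
  - move=> n; exact: normr_ge0.
  - move=> n; rewrite /=; apply: le_trans (hb n); exact: nc_ge0.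
  - move=> n; rewrite /=; apply: le_trans (hb n); exact: nc_Re.
have hi : cvgn (series (fun n => complex.Im (x n))).
  apply: (@normed_cvg R R).
  apply: (@series_le_cvg R _ (geometric K q)) => //.
  - move=> n; exact: normr_ge0.
  - move=> n; rewrite /=; apply: le_trans (hb n); exact: nc_ge0.
  - move=> n; rewrite /=; apply: le_trans (hb n); exact: nc_Im.
exists ((limn (series (fun n => complex.Re (x n))) +i* limn (series (fun n => complex.Im (x n))))%C).
apply: cvg_ReIm.
  have -> : (fun n => complex.Re (series x n)) = series (fun n => complex.Re (x n)).
    by apply: funext => n; rewrite /series /= Re_sum.
  exact: hr.
have -> : (fun n => complex.Im (series x n)) = series (fun n => complex.Im (x n)).
  by apply: funext => n; rewrite /series /= Im_sum.
exact: hi.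
Qed.


Lemma series_S (u : nat -> C) n : series u n.+1 = series u n + u n.
Proof. by rewrite /series /= big_nat_recr. Qed.

Lemma series_0 (u : nat -> C) : series u 0 = 0.
Proof. by rewrite /series /= big_geq. Qed.

Lemma claim1 (x y : nat -> C) N :
  series (fun n => \sum_(i < n.+1) x i * y (n - i)%N) N =
  \sum_(0 <= i < N) x i * series y (N - i)%N.
Proof.
elim: N => [|N IH]; first by rewrite series_0 big_geq.
rewrite series_S IH /= big_nat_recr //= subSnn series_S series_0 add0r.
rewrite -(big_mkord xpredT (fun i => x i * y (N - i)%N)).
rewrite big_nat_recr //= subnn addrA; congr (_ + _).
rewrite -big_split /=.
apply: eq_big_nat => i /andP[_ hi].
by rewrite subSn ?series_S ?mulrDr // ltnW.
Qed.

Lemma claim2 (x y : nat -> C) N :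
  series x N * series y N - series (fun n => \sum_(i < n.+1) x i * y (n - i)%N) N =
  \sum_(0 <= i < N) x i * \sum_((N - i)%N <= j < N) y j.
Proof.
rewrite claim1 {1}/series /= big_distrl /= -sumrB.
apply: eq_big_nat => i /andP[_ hi].
rewrite -mulrBr; congr (_ * _).
rewrite /series /= (big_cat_nat (n := (N - i)%N)) //= ?leq_subr //.
by rewrite addrC addrK.
Qed.

Lemma sum_geo_le (q : R) N : 0 < q -> q < 1 ->
  \sum_(0 <= k < N) q ^+ k <= (1 - q)^-1.
Proof.
move=> q0 q1.
have h : `|q| < 1 by rewrite ger0_norm // ltW.
have := @geometric_le_lim R N 1 q ler01 q0 h.
by rewrite mul1r /series /=; under eq_bigr do rewrite mul1r.
Qed.


Lemma claim3 (x y : nat -> C) (Kx Ky q : R) N : 0 < q -> q < 1 -> 0 <= Kx -> 0 <= Ky ->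
  (forall n, nc (x n) <= Kx * q ^+ (2 * n)) -> (forall n, nc (y n) <= Ky * q ^+ (2 * n)) ->
  nc (\sum_(0 <= i < N) x i * \sum_((N - i)%N <= j < N) y j)
   <= Kx * Ky * (1 - q)^-1 * (1 - q)^-1 * q ^+ N.
Proof.
move=> q0 q1 Kx0 Ky0 hx hy.
apply: le_trans (nc_sum _ _ _ _) _.
set B := (1 - q)^-1.
have B0 : 0 <= B by rewrite invr_ge0 subr_ge0 ltW.
have qn n : 0 <= q ^+ n by rewrite exprn_ge0 // ltW.
apply: (@le_trans _ _ (\sum_(0 <= i < N) Kx * Ky * q ^+ N * B * q ^+ i)).
  apply: ler_sum_nat => i /andP[_ hi].
  rewrite nc_M.
  have h1 : nc (\sum_((N - i)%N <= j < N) y j) <= \sum_((N - i)%N <= j < N) Ky * q ^+ (2 * j).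
    apply: le_trans (nc_sum _ _ _ _) _.
    by apply: ler_sum => j _; apply: hy.
  apply: le_trans (ler_pM (nc_ge0 _) (nc_ge0 _) (hx i) h1) _.
  rewrite mulr_sumr.
  apply: (@le_trans _ _ (\sum_((N - i)%N <= j < N) Kx * Ky * q ^+ N * q ^+ i * q ^+ j)).
    apply: ler_sum_nat => j /andP[hj _].
    have e : Kx * q ^+ (2 * i) * (Ky * q ^+ (2 * j)) = Kx * Ky * q ^+ (i + j) * q ^+ i * q ^+ j.
      by rewrite !mul2n -!addnn !exprD; ring.
    rewrite e; apply: (ler_wpM2r (qn j)).
    apply: (ler_wpM2r (qn i)).
    apply: (ler_wpM2l (mulr_ge0 Kx0 Ky0)).
    have hij : (N <= i + j)%N by lia.
    exact: (ler_wiXn2l (ltW q0) (ltW q1) hij).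
  rewrite -mulr_sumr.
  apply: (@le_trans _ _ (Kx * Ky * q ^+ N * q ^+ i * \sum_(0 <= j < N) q ^+ j)).
    apply: ler_wpM2l; first by rewrite !mulr_ge0.
    rewrite [X in _ <= X](big_cat_nat (n := (N - i)%N)) //= ?leq_subr //.
    by rewrite lerDr sumr_ge0.
  rewrite [X in _ <= X]mulrAC.
  apply: ler_wpM2l; first by rewrite !mulr_ge0.
  exact: sum_geo_le.
rewrite -mulr_sumr.
apply: (@le_trans _ _ (Kx * Ky * q ^+ N * B * B)).
  apply: ler_wpM2l; first by rewrite !mulr_ge0.
  exact: sum_geo_le.
by rewrite -!mulrA ler_wpM2l // ler_wpM2l // [q ^+ N * _]mulrC -!mulrA.
Qed.

Lemma cauchy_prod (x y : nat -> C) (X Y : C) (Kx Ky q : R) :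
  0 < q -> q < 1 -> 0 <= Kx -> 0 <= Ky ->
  (forall n, nc (x n) <= Kx * q ^+ (2 * n)) -> (forall n, nc (y n) <= Ky * q ^+ (2 * n)) ->
  series x @ \oo --> X -> series y @ \oo --> Y ->
  series (fun n => \sum_(i < n.+1) x i * y (n - i)%N) @ \oo --> X * Y.
Proof.
move=> q0 q1 Kx0 Ky0 hx hy cx cy.
set S := series (fun n => _).
have hD : (fun N => series x N * series y N - S N) @ \oo --> (0 : C).
  apply: (@cvg_bound _ _ (geometric (Kx * Ky * (1 - q)^-1 * (1 - q)^-1) q)).
    by apply: cvg_geometric; rewrite ger0_norm ?ltW.
  move=> N; rewrite subr0 /S claim2.
  exact: (@claim3 x y Kx Ky q N q0 q1 Kx0 Ky0 hx hy).
have -> : S = (fun N => series x N * series y N - (series x N * series y N - S N)).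
  by apply: funext => N; rewrite opprB addrC subrK.
rewrite -[X * Y]subr0.
apply: cvgB; last exact: hD.
exact: (cvgM cx cy).
Qed.

End Ana.

Section Fin.
Variable R : realType.
Local Notation C := (Cplx R).
Local Notation nc := (@Normc.normc R).

Lemma ratio_le (u d t : nat -> C) (r : R) N0 :
  (forall n, u n.+1 * d n = u n * t n) ->
  (forall n, (N0 <= n)%N -> d n != 0 /\ nc (t n) <= r * nc (d n)) ->
  forall n, (N0 <= n)%N -> nc (u n.+1) <= r * nc (u n).
Proof.
move=> he hb n hn; have [dn0 tn] := hb n hn.
have dpos : 0 < nc (d n).
  rewrite lt_def nc_ge0 andbT; apply/negP => /eqP/Normc.eq0_normc h.
  by rewrite h eqxx in dn0.
rewrite -(ler_pM2r dpos) -nc_M he nc_M [r * _]mulrC -mulrA.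
by apply: ler_wpM2l; [exact: nc_ge0 | exact: tn].
Qed.

Lemma quarter : ((2^-1 : R) ^+ 2) = 4^-1.
Proof. by rewrite expr2 -invfM; congr (_^-1); rewrite -natrM. Qed.

Lemma x_bound (a c z : C) (hc : forall n : nat, c != - (n%:R)) :
  exists K, 0 <= K /\ forall n, nc (mm R a c n * z ^+ n) <= K * (2^-1 : R) ^+ (2 * n).
Proof.
set A := nc a; set Cc := nc c; set Z := nc z.
have A0 : 0 <= A by exact: nc_ge0.
have C0 : 0 <= Cc by exact: nc_ge0.
have Z0 : 0 <= Z by exact: nc_ge0.
set N0 := Num.bound (Cc + 4 * Z * (1 + A)).
have hN0 : Cc + 4 * Z * (1 + A) < N0%:R.
  apply: archi_boundP; apply: addr_ge0 => //; apply: mulr_ge0; last exact: addr_ge0.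
  by apply: mulr_ge0.
have rat := @ratio_le (fun n => mm R a c n * z ^+ n)
   (fun n => (n.+1)%:R * (c + n%:R)) (fun n => (a + n%:R) * z) (4^-1) N0.
have := @geom_bound R (fun n => nc (mm R a c n * z ^+ n)) 4^-1 N0.
case.
- by rewrite invr_gt0.
- by move=> n; exact: nc_ge0.
- apply: rat.
    move=> n /=.
    have e := @mm_rec R a c hc n.
    rewrite exprS.
    transitivity (((n.+1)%:R * (c + n%:R) * mm R a c n.+1) * z * z ^+ n); first ring.
    by rewrite e; ring.
  move=> n hn; split.
    by apply: mulf_neq0; [exact: nat1_neq0 | exact: cn_neq0].
  have hn' : N0%:R <= n%:R :> R by rewrite ler_nat.
  have n0 : 0 <= n%:R :> R by exact: ler0n.
  have h1 : nc (a + n%:R) <= A + n%:R.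
    by apply: le_trans (le_normcD _ _) _; rewrite nc_natr.
  have h2 : n%:R - Cc <= nc (c + n%:R).
    rewrite lerBlDr.
    have -> : (n%:R : R) = nc ((c + n%:R) + - c) by rewrite addrC addKr nc_natr.
    by apply: le_trans (le_normcD _ _) _; rewrite nc_N.
  rewrite !nc_M nc_natr.
  have T0 : 0 <= nc (a + n%:R) by exact: nc_ge0.
  have D0 : 0 <= nc (c + n%:R) by exact: nc_ge0.
  have h3 : nc (a + n%:R) * Z <= (A + n%:R) * Z by apply: ler_wpM2r.
  have h4 : (n.+1%:R) * (n%:R - Cc) <= n.+1%:R * nc (c + n%:R).
    by apply: ler_wpM2l => //; exact: ler0n.
  rewrite -natr1 in h4 *.
  have h5 : 0 <= (n%:R + 1) * (n%:R - Cc - 4 * Z * (1 + A)).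
    by apply: mulr_ge0; lra.
  have h6 : 0 <= Z * (n%:R * A + 1) by apply: mulr_ge0 => //; nra.
  rewrite -/Z; nra.
move=> K [K0 hK]; exists K; split => // n.
by rewrite exprM quarter; exact: hK.
Qed.


Lemma y_bound (w : C) :
  exists K, 0 <= K /\ forall n, nc (w ^+ n / (n`!)%:R) <= K * (2^-1 : R) ^+ (2 * n).
Proof.
set W := nc w.
have W0 : 0 <= W by exact: nc_ge0.
set N0 := Num.bound (4 * W).
have hN0 : 4 * W < N0%:R by apply: archi_boundP; apply: mulr_ge0.
have rat := @ratio_le (fun n => w ^+ n / (n`!)%:R)
   (fun n => (n.+1)%:R) (fun n => w) (4^-1) N0.
have := @geom_bound R (fun n => nc (w ^+ n / (n`!)%:R)) 4^-1 N0.
case.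
- by rewrite invr_gt0.
- by move=> n; exact: nc_ge0.
- apply: rat.
    move=> n /=.
    rewrite exprS factS natrM.
    have := fact_neq0 R n; have := nat1_neq0 R n => h1 h2.
    by field; rewrite h2 /= addrC natr1 nat1_neq0.
  move=> n hn; split; first exact: nat1_neq0.
  have hn' : N0%:R <= n%:R :> R by rewrite ler_nat.
  rewrite nc_natr -/W -[n.+1]addn1 natrD.
  have e4 : (4 : R) * 4^-1 = 1 by rewrite mulfV.
  have n0 : 0 <= n%:R :> R by exact: ler0n.
  have t0 : 0 <= 4^-1 :> R by rewrite invr_ge0.
  nra.
move=> K [K0 hK]; exists K; split => // n.
by rewrite exprM quarter; exact: hK.
Qed.

Lemma useq_eq (a c p z : C) (hc : forall n : nat, c != - (n%:R)) n :
  useq a c p n * z ^+ n =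
  \sum_(i < n.+1) (mm R a c i * z ^+ i) * ((p * z) ^+ (n - i)%N / ((n - i)%N`!)%:R).
Proof.
rewrite /useq (@upairW R a c p hc n) /= /WW mulr_suml.
apply: eq_bigr => i _.
have hi : (i <= n)%N by rewrite -ltnS.
have -> : z ^+ n = z ^+ i * z ^+ (n - i) by rewrite -exprD subnKC.
rewrite exprMn /ee.
ring.
Qed.

End Fin.

Theorem theorem2p1 (R : realType) (a c p : Cplx R)
    (hc : forall n : nat, c != - (n%:R)) (z : Cplx R) :
  series (fun n => useq a c p n * z ^+ n) @ \oo --> expC (p * z) * kummerM a c z.
Proof.
have [Kx [Kx0 hx]] := @x_bound R a c z hc.
have [Ky [Ky0 hy]] := @y_bound R (p * z).
have q0 : (0 : R) < 2^-1 by rewrite invr_gt0.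
have q1 : (2^-1 : R) < 1 by rewrite invf_lt1 // ltr1n.
have q20 : (0 : R) <= (2^-1) ^+ 2 by rewrite exprn_ge0 // ltW.
have q21 : (2^-1 : R) ^+ 2 < 1 by rewrite (quarter R) invf_lt1 // ltr1n.
have hx' : forall n, Normc.normc (mm R a c n * z ^+ n) <= Kx * ((2^-1 : R) ^+ 2) ^+ n.
  by move=> n; rewrite -exprM; exact: hx.
have hy' : forall n, Normc.normc ((p * z) ^+ n / (n`!)%:R) <= Ky * ((2^-1 : R) ^+ 2) ^+ n.
  by move=> n; rewrite -exprM; exact: hy.
have [X cX] := @series_cvg_geom R _ _ _ q20 q21 hx'.
have [Y cY] := @series_cvg_geom R _ _ _ q20 q21 hy'.
have hP := @cauchy_prod R (fun n => mm R a c n * z ^+ n) (fun n => (p * z) ^+ n / (n`!)%:R) X Y Kx Ky (2^-1) q0 q1 Kx0 Ky0 hx hy cX cY.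
have eK : kummerM a c z = X.
  rewrite /kummerM; apply: (@cvg_lim _ (@norm_hausdorff _ _) _ _ _ _ _ cX).
have eE : expC (p * z) = Y.
  rewrite /expC; apply: (@cvg_lim _ (@norm_hausdorff _ _) _ _ _ _ _ cY).
rewrite eK eE mulrC.
have -> : (fun n => useq a c p n * z ^+ n) =
   (fun n => \sum_(i < n.+1) (mm R a c i * z ^+ i) * ((p * z) ^+ (n - i)%N / ((n - i)%N`!)%:R)).
  by apply: funext => n; exact: (@useq_eq R a c p z hc n).
exact: hP.
Qed.
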